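(* Let $A\subseteq B$ be a ring extension (commutative rings with identity) and let $\mathfrak a$ be a $B$-regular ideal of $A$. Then the following conditions are equivalent: (i) $\mathfrak a$ is faithfully flat as an $A$-module; (ii) $\mathfrak a$ is locally principal, i.e. $\mathfrak aA_{\mathfrak m}$ is a principal ideal of $A_{\mathfrak m}$ for every maximal ideal $\mathfrak m$ of $A$.
   Context: An $A$-submodule $S$ of $B$ is called $B$-regular if $SB=B$. ''Ideal'' means an (integral) ideal of $A$. *)

(* Defs.v *)
From HB Require Import structures.
From mathcomp Require Import all_boot all_order all_algebra.
Set Implicit Arguments. Unset Strict Implicit. Unset Printing Implicit Defensive.
Import GRing.Theory.
Local Open Scope ring_scope.

Section Defs.
Variable A : comPzRingType.

Definition is_ideal (I : A -> Prop) : Prop :=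
  [/\ I 0,
      (forall x y, I x -> I y -> I (x + y)) &
      (forall r x, I x -> I (r * x))].

Definition is_maximal_ideal (m : A -> Prop) : Prop :=
  [/\ is_ideal m, ~ m 1 &
      (forall J : A -> Prop, is_ideal J -> (forall x, m x -> J x) ->
         J 1 \/ (forall x, J x <-> m x))].

(* Localization at the complement S = A \ m of a maximal ideal m, described
   by fractions x/s with s not in m:
   loc_eq m x s y t  <->  x/s = y/t in A_m, i.e. u*(x*t - y*s) = 0 for some u not in m. *)
Definition loc_eq (m : A -> Prop) (x s y t : A) : Prop :=
  exists u, ~ m u /\ u * (x * t - y * s) = 0.

(* x/s belongs to the extended ideal I A_m = S^{-1} I = { a/u : a in I, u not in m } *)
Definition in_loc_ideal (I m : A -> Prop) (x s : A) : Prop :=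
  exists a u, [/\ I a, ~ m u & loc_eq m x s a u].

(* I A_m is a principal ideal of A_m: I A_m = (g/gs) A_m for some g/gs in A_m *)
Definition loc_principal (I m : A -> Prop) : Prop :=
  exists g gs, ~ m gs /\
    forall x s, ~ m s ->
      (in_loc_ideal I m x s <->
       exists r rs, ~ m rs /\ loc_eq m x s (r * g) (rs * gs)).

Definition locally_principal (I : A -> Prop) : Prop :=
  forall m, is_maximal_ideal m -> loc_principal I m.

(* A-bilinear maps I x N -> P (given as functions A -> N -> P, only their
   behaviour on I x N matters). *)
Definition bilinear_on (I : A -> Prop) (N P : lmodType A) (beta : A -> N -> P) :=
  [/\ (forall x y n, I x -> I y -> beta (x + y) n = beta x n + beta y n),
      (forall r x n, I x -> beta (r * x) n = r *: beta x n),
      (forall x n n', I x -> beta x (n + n') = beta x n + beta x n') &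
      (forall r x n, I x -> beta x (r *: n) = r *: beta x n)].

(* The element \sum_(p <- s) p.1 (x) p.2 of the tensor product I (x)_A N is zero
   (universal property of the tensor product: it is killed by every
   A-bilinear map out of I x N). *)
Definition ideal_tensor_zero (I : A -> Prop) (N : lmodType A) (s : seq (A * N)) :=
  forall (P : lmodType A) (beta : A -> N -> P), bilinear_on I beta ->
    \sum_(p <- s) beta p.1 p.2 = 0.

(* I is flat as an A-module: I (x)_A - preserves injective A-linear maps *)
Definition flat_ideal (I : A -> Prop) : Prop :=
  forall (N N' : lmodType A) (g : {linear N -> N'}), injective g ->
    forall s : seq (A * N), (forall p, p \in s -> I p.1) ->
      ideal_tensor_zero I [seq (p.1, g p.2) | p <- s] ->
      ideal_tensor_zero I s.

(* I is faithfully flat: flat, and I (x)_A N = 0 implies N = 0 *)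
Definition faithfully_flat_ideal (I : A -> Prop) : Prop :=
  flat_ideal I /\
  forall N : lmodType A,
    (forall x (n : N), I x -> ideal_tensor_zero I [:: (x, n)]) ->
    forall n : N, n = 0.

End Defs.

(* For a ring extension f : A -> B (injective), the A-submodule I of A is
   B-regular: I B = B, where I B = { \sum f(a_i) b_i : a_i in I, b_i in B }. *)
Definition B_regular (A B : comPzRingType) (f : {rmorphism A -> B}) (I : A -> Prop) :=
  forall b : B, exists s : seq (A * B),
    (forall p, p \in s -> I p.1) /\ b = \sum_(p <- s) f p.1 * p.2.

(* Main.v *)
Require Import Defs.
From HB Require Import structures.
From mathcomp Require Import all_boot all_order all_algebra.
From mathcomp Require Import boolp classical_sets.
From mathcomp Require Import ring.
Set Implicit Arguments. Unset Strict Implicit. Unset Printing Implicit Defensive.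
Import GRing.Theory.
Local Open Scope ring_scope.

Local Open Scope quotient_scope.

Record loc_hyp (A : comPzRingType) (m : A -> Prop) (M : lmodType A)
  (L : M -> Prop) : Prop := LocHyp {
  lh_m1 : ~ m 1;
  lh_mul : forall u v, ~ m u -> ~ m v -> ~ m (u * v);
  lh_L0 : L 0;
  lh_LD : forall x y, L x -> L y -> L (x + y);
  lh_LZ : forall (r : A) x, L x -> L (r *: x) }.

Section Loc.
Variables (A : comPzRingType) (m : A -> Prop) (M : lmodType A) (L : M -> Prop).
Variable h : loc_hyp m L.

Definition LT := {p : M * A | `[< ~ m p.2 >]}.
Definition num (p : LT) := (val p).1.
Definition den (p : LT) := (val p).2.
Lemma denP p : ~ m (den p). Proof. by have /asboolP := valP p. Qed.
Arguments denP : clear implicits.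
Definition mkLT (x : M) (s : A) (hs : ~ m s) : LT := exist _ (x, s) (asboolT hs).
Arguments mkLT : clear implicits.

Lemma LN x : L x -> L (- x).
Proof. by move=> Lx; rewrite -scaleN1r; apply: (lh_LZ h). Qed.

Definition lrel (p q : LT) : bool :=
  `[< exists u, ~ m u /\ L (u *: (den q *: num p - den p *: num q)) >].

Lemma lrelP p q : reflect (exists u, ~ m u /\ L (u *: (den q *: num p - den p *: num q))) (lrel p q).
Proof. exact: asboolP. Qed.

Lemma lrel_eq p q : den q *: num p = den p *: num q -> lrel p q.
Proof.
move=> e; apply/lrelP; exists 1; split; first exact: lh_m1 h.
by rewrite e subrr scaler0; apply: lh_L0 h.
Qed.

Lemma lrel_refl : reflexive lrel.
Proof. by move=> p; apply: lrel_eq. Qed.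

Lemma lrel_sym : symmetric lrel.
Proof.
suff H : forall p q, lrel p q -> lrel q p by move=> p q; apply/idP/idP; apply: H.
move=> p q /lrelP [u [hu Hu]]; apply/lrelP; exists u; split => //.
by rewrite -opprB scalerN; apply: LN.
Qed.

Lemma vec3 (a b c : M) (x1 x2 y1 y2 y3 y4 : A) :
  x1 = y1 -> y2 = y3 -> x2 = y4 ->
  x1 *: a - x2 *: c = y1 *: a - y2 *: b + (y3 *: b - y4 *: c).
Proof. by move=> -> -> ->; rewrite addrA subrK. Qed.

Lemma vec4 (a b c d : M) (x1 x2 x3 x4 y1 y2 y3 y4 : A) :
  x1 = y1 -> x2 = y2 -> x3 = y3 -> x4 = y4 ->
  x1 *: a + x2 *: b - (x3 *: c + x4 *: d) = (y1 *: a - y3 *: c) + (y2 *: b - y4 *: d).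
Proof. by move=> -> -> -> ->; rewrite opprD addrACA. Qed.

Lemma lrel_trans : transitive lrel.
Proof.
move=> q p r /lrelP [u [hu Hu]] /lrelP [v [hv Hv]]; apply/lrelP.
exists (u * v * den q); split.
  by apply: (lh_mul h); [apply: (lh_mul h)|apply: denP].
have -> : (u * v * den q) *: (den r *: num p - den p *: num r) =
   (v * den r) *: (u *: (den q *: num p - den p *: num q)) +
   (u * den p) *: (v *: (den r *: num q - den q *: num r)).
  by rewrite !scalerBr !scalerA; apply: vec3; timeout 20 ring.
by apply: (lh_LD h); apply: (lh_LZ h).
Qed.

Canonical lrel_equiv := EquivRel lrel lrel_refl lrel_sym lrel_trans.

Definition Loc := {eq_quot lrel}.
HB.instance Definition _ : EqQuotient _ lrel Loc := EqQuotient.on Loc.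
HB.instance Definition _ := Choice.on Loc.


Lemma mkLT_ext x y s t hs ht : x = y -> s = t -> @mkLT x s hs = @mkLT y t ht.
Proof. by move=> e1 e2; subst; congr mkLT; apply: Prop_irrelevance. Qed.

Definition addT (p q : LT) : LT :=
  @mkLT (den q *: num p + den p *: num q) (den p * den q)
        (lh_mul h (denP p) (denP q)).
Definition oppT (p : LT) : LT := @mkLT (- num p) (den p) (denP p).
Definition zeroT : LT := @mkLT 0 1 (lh_m1 h).
Definition scaleT (r : A) (p : LT) : LT := @mkLT (r *: num p) (den p) (denP p).

Lemma addT_compat p p' q q' : lrel p p' -> lrel q q' -> lrel (addT p q) (addT p' q').
Proof.
move=> /lrelP [u [hu Hu]] /lrelP [v [hv Hv]]; apply/lrelP.
exists (u * v); split; first exact: (lh_mul h).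
rewrite /addT /num /den /=.
have -> : (u * v) *: ((den p' * den q') *: (den q *: num p + den p *: num q) -
           (den p * den q) *: (den q' *: num p' + den p' *: num q')) =
   (v * den q * den q') *: (u *: (den p' *: num p - den p *: num p')) +
   (u * den p * den p') *: (v *: (den q' *: num q - den q *: num q')).
  by rewrite !scalerBr !scalerDr ?scalerBr !scalerA; apply: vec4; timeout 20 ring.
by apply: (lh_LD h); apply: (lh_LZ h).
Qed.

Lemma oppT_compat p p' : lrel p p' -> lrel (oppT p) (oppT p').
Proof.
move=> /lrelP [u [hu Hu]]; apply/lrelP; exists u; split => //.
rewrite /oppT /num /den /= !scalerN -opprD scalerN; exact: LN.
Qed.

Lemma scaleT_compat r p p' : lrel p p' -> lrel (scaleT r p) (scaleT r p').
Proof.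
move=> /lrelP [u [hu Hu]]; apply/lrelP; exists u; split => //.
rewrite /scaleT /num /den /=.
have -> : u *: ((sval p').2 *: (r *: (sval p).1) - (sval p).2 *: (r *: (sval p').1))
  = r *: (u *: (den p' *: num p - den p *: num p')).
  by rewrite !scalerBr !scalerA; congr (_ *: _ - _ *: _); timeout 20 ring.
exact: (lh_LZ h).
Qed.

Local Notation Q := (Loc).

Lemma reprE (p : LT) : lrel (repr (\pi_Q p)) p.
Proof. by apply/eqmodP; rewrite reprK. Qed.

Definition ladd := lift_op2 Q addT.
Lemma pi_add : {morph \pi_Q : x y / addT x y >-> ladd x y}.
Proof.
move=> x y; unlock ladd; apply/eqmodP; apply: addT_compat;
  by rewrite lrel_sym reprE.
Qed.
Canonical pi_add_morph := PiMorph2 pi_add.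

Definition lopp := lift_op1 Q oppT.
Lemma pi_opp : {morph \pi_Q : x / oppT x >-> lopp x}.
Proof.
move=> x; unlock lopp; apply/eqmodP; apply: oppT_compat; by rewrite lrel_sym reprE.
Qed.
Canonical pi_opp_morph := PiMorph1 pi_opp.

Definition lscale (r : A) := lift_op1 Q (scaleT r).
Lemma pi_scale r : {morph \pi_Q : x / scaleT r x >-> lscale r x}.
Proof.
move=> x; unlock lscale; apply/eqmodP; apply: scaleT_compat; by rewrite lrel_sym reprE.
Qed.
Canonical pi_scale_morph r := PiMorph1 (pi_scale r).

Definition lzero : Q := \pi_Q zeroT.

Lemma laddA : associative ladd.
Proof.
elim/quotW=> x; elim/quotW=> y; elim/quotW=> z; rewrite !piE; congr (\pi _).
apply: mkLT_ext; rewrite /num /den /=; last by timeout 20 ring.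
rewrite !scalerDr !scalerA addrA; congr (_ *: _ + _ *: _ + _ *: _); timeout 20 ring.
Qed.

Lemma laddC : commutative ladd.
Proof.
elim/quotW=> x; elim/quotW=> y; rewrite !piE; congr (\pi _).
by apply: mkLT_ext; rewrite /num /den /=; [rewrite addrC|rewrite mulrC].
Qed.

Lemma ladd0 : left_id lzero ladd.
Proof.
elim/quotW=> x; rewrite /lzero !piE.
have -> : addT zeroT x = x.
  by apply: val_inj; rewrite /= /num /den /= scaler0 add0r scale1r mul1r; case: (val x).
by [].
Qed.

Lemma laddN : left_inverse lzero lopp ladd.
Proof.
elim/quotW=> x; rewrite /lzero !piE; apply/eqmodP; apply: lrel_eq.
by rewrite /num /den /= scaler0 scale1r scalerN addNr.
Qed.

HB.instance Definition _ := GRing.isZmodule.Build Q laddA laddC ladd0 laddN.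

Lemma lscaleA a b (v : Q) : lscale a (lscale b v) = lscale (a * b) v.
Proof.
elim/quotW: v => x; rewrite !piE; congr (\pi _).
by apply: mkLT_ext; rewrite /num /den //= scalerA.
Qed.

Lemma lscale1 : left_id 1 lscale.
Proof.
elim/quotW=> x; rewrite !piE; congr (\pi _).
by apply: val_inj; rewrite /= /num /den /= scale1r; case: (val x).
Qed.

Lemma lscaleDr : right_distributive lscale +%R.
Proof.
move=> r; elim/quotW=> x; elim/quotW=> y.
rewrite /GRing.add /= !piE; congr (\pi _).
by apply: mkLT_ext; rewrite /num /den //= scalerDr !scalerA mulrC [r * _]mulrC.
Qed.

Lemma lscaleDl v : {morph lscale^~ v: a b / a + b}.
Proof.
move=> a b; elim/quotW: v => x.
have -> : lscale a (\pi_Q x) + lscale b (\pi_Q x) = ladd (lscale a (\pi_Q x)) (lscale b (\pi_Q x)) by [].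
rewrite !piE; apply/eqmodP; apply: lrel_eq.
rewrite /num /den /= !scalerA scalerDr !scalerA mulrDr scalerDl.
by congr (_ *: _ + _ *: _); timeout 20 ring.
Qed.

HB.instance Definition _ := GRing.Zmodule_isLmodule.Build A Q lscaleA lscale1 lscaleDr lscaleDl.

Definition frac (x : M) (s : A) (hs : ~ m s) : Q := \pi_Q (mkLT x s hs).
Arguments frac : clear implicits.

Lemma fracP x s hs y t ht : frac x s hs = frac y t ht <->
  exists u, ~ m u /\ L (u *: (t *: x - s *: y)).
Proof.
split; first by move/eqmodP/lrelP.
by move=> H; apply/eqmodP/lrelP.
Qed.

Lemma frac_ext x y s t hs ht : x = y -> s = t -> frac x s hs = frac y t ht.
Proof. by move=> e1 e2; rewrite /frac (mkLT_ext hs ht e1 e2). Qed.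

Lemma frac0 : (0 : Q) = frac 0 1 (lh_m1 h).
Proof. by []. Qed.

Lemma frac_eq0 x s hs : frac x s hs = 0 <-> exists u, ~ m u /\ L (u *: x).
Proof. by rewrite frac0 fracP scale1r scaler0 subr0. Qed.

Lemma fracD x s hs y t ht : frac x s hs + frac y t ht =
  frac (t *: x + s *: y) (s * t) (lh_mul h hs ht).
Proof.
have -> : frac x s hs + frac y t ht = ladd (frac x s hs) (frac y t ht) by [].
by rewrite /frac piE; congr (\pi _); apply: mkLT_ext.
Qed.

Lemma fracZ r x s hs : r *: frac x s hs = frac (r *: x) s hs.
Proof.
have -> : r *: frac x s hs = lscale r (frac x s hs) by [].
by rewrite /frac piE; congr (\pi _); apply: mkLT_ext.
Qed.

Lemma frac_surj (q : Q) : exists x s hs, q = @frac x s hs.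
Proof.
elim/quotW: q => p; exists (num p), (den p), (denP p); rewrite /frac; congr (\pi _).
by case: p => [[x s] hp]; apply: val_inj.
Qed.

Lemma frac_same x y s hs : frac x s hs + frac y s hs = frac (x + y) s hs.
Proof.
rewrite fracD fracP; exists 1; split; first exact: (lh_m1 h).
rewrite scale1r !scalerDr !scalerA subrr; exact: (lh_L0 h).
Qed.

End Loc.

Arguments frac {A m M L} h x s hs.
Arguments denP {A m M} p.
Arguments mkLT {A m M} x s hs.

Lemma vec2z (A : comPzRingType) (M : lmodType A) (X Y : M) (a1 a2 b1 b2 : A) :
  a1 = b1 -> a2 = b2 -> a1 *: X + a2 *: Y - (b1 *: X + b2 *: Y) = 0.
Proof. by move=> -> ->; rewrite subrr. Qed.

Section LocMap.
Variables (A : comPzRingType) (m : A -> Prop) (M1 M2 : lmodType A).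
Variables (L1 : M1 -> Prop) (L2 : M2 -> Prop) (h1 : loc_hyp m L1) (h2 : loc_hyp m L2).
Variables (psi : M1 -> M2)
  (psiD : forall v w, psi (v + w) = psi v + psi w)
  (psiZ : forall (r : A) v, psi (r *: v) = r *: psi v)
  (psiL : forall v, L1 v -> L2 (psi v)) (c : A) (hc : ~ m c).

Definition locmap (q : Loc h1) : Loc h2 :=
  frac h2 (psi (num (repr q))) (den (repr q) * c) (lh_mul h2 (denP (repr q)) hc).

Lemma psiN v : psi (- v) = - psi v.
Proof. by rewrite -scaleN1r psiZ scaleN1r. Qed.

Lemma psiB v w : psi (v - w) = psi v - psi w.
Proof. by rewrite psiD psiN. Qed.

Lemma locmap_frac x s hs : locmap (frac h1 x s hs) = frac h2 (psi x) (s * c) (lh_mul h2 hs hc).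
Proof.
rewrite /locmap; have /lrelP [u [hu Hu]] := reprE h1 (mkLT x s hs).
apply/fracP; exists u; split => //.
rewrite /num /den /= in Hu.
have -> : u *: ((s * c) *: psi (num (repr (frac h1 x s hs))) -
     (den (repr (frac h1 x s hs)) * c) *: psi x) =
   psi (c *: (u *: (s *: num (repr (\pi_(Loc h1) (mkLT x s hs))) -
     den (repr (\pi_(Loc h1) (mkLT x s hs))) *: x))).
  by rewrite !psiZ psiB !psiZ !scalerBr !scalerA; congr (_ *: _ - _ *: _); timeout 20 ring.
by apply: psiL; apply: (lh_LZ h1).
Qed.

Lemma locmap_lin : linear_for *:%R locmap.
Proof.
move=> r q1 q2.
have [x [s [hs ->]]] := frac_surj q1.
have [y [t [ht ->]]] := frac_surj q2.
rewrite fracZ fracD !locmap_frac fracZ fracD fracP; exists 1; split; first exact: (lh_m1 h2).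
rewrite scale1r psiD !psiZ !scalerDr !scalerA vec2z; first exact: (lh_L0 h2).
all: timeout 20 ring.
Qed.


End LocMap.

Definition locmapL (A : comPzRingType) (m : A -> Prop) (M1 M2 : lmodType A)
  (L1 : M1 -> Prop) (L2 : M2 -> Prop) (h1 : loc_hyp m L1) (h2 : loc_hyp m L2)
  (psi : M1 -> M2)
  (psiD : forall v w, psi (v + w) = psi v + psi w)
  (psiZ : forall (r : A) v, psi (r *: v) = r *: psi v)
  (psiL : forall v, L1 v -> L2 (psi v)) (c : A) (hc : ~ m c) : {linear Loc h1 -> Loc h2} :=
  HB.pack (locmap h2 psi hc) (GRing.isLinear.Build _ _ _ _ (locmap h2 psi hc)
     (@locmap_lin _ _ _ _ _ _ h1 h2 psi psiD psiZ psiL c hc)).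

Lemma locmapLE (A : comPzRingType) (m : A -> Prop) (M1 M2 : lmodType A)
  (L1 : M1 -> Prop) (L2 : M2 -> Prop) (h1 : loc_hyp m L1) (h2 : loc_hyp m L2)
  (psi : M1 -> M2) psiD psiZ psiL (c : A) (hc : ~ m c) q :
  @locmapL A m M1 M2 L1 L2 h1 h2 psi psiD psiZ psiL c hc q = locmap h2 psi hc q.
Proof. by []. Qed.

Local Close Scope quotient_scope.

Section General.
Variable A : comPzRingType.

Lemma max_notm1 (m : A -> Prop) : is_maximal_ideal m -> ~ m 1.
Proof. by case. Qed.

Lemma max_ideal (m : A -> Prop) : is_maximal_ideal m -> is_ideal m.
Proof. by case. Qed.

Lemma max_prime (m : A -> Prop) : is_maximal_ideal m ->
  forall u v, ~ m u -> ~ m v -> ~ m (u * v).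
Proof.
move=> [[m0 mD mM] m1 mmax] u v hu hv muv.
have step : forall w, ~ m w -> exists k r, m k /\ 1 = k + r * w.
  move=> w hw.
  pose J := fun z => exists k r, m k /\ z = k + r * w.
  have JI : is_ideal J.
    split.
    - by exists 0, 0; split => //; rewrite mul0r addr0.
    - move=> x y [k [r [mk ->]]] [k' [r' [mk' ->]]]; exists (k + k'), (r + r').
      by split; [apply: mD | ring].
    - move=> r x [k [r' [mk ->]]]; exists (r * k), (r * r').
      by split; [apply: mM | ring].
  have mJ : forall x, m x -> J x by move=> x mx; exists x, 0; rewrite mul0r addr0.
  case: (mmax J JI mJ) => [//|HJ].
  exfalso; apply: hw; apply/HJ; exists 0, 1; split => //; ring.
have [k [r [mk e1]]] := step u hu.
have [k' [r' [mk' e2]]] := step v hv.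
apply: m1.
have -> : 1 = (k' + r' * v) * k + (r * u) * k' + (r * r') * (u * v).
  by rewrite -[1](mulr1 1) {1}e1 e2; ring.
by apply: (mD); [apply: (mD)|]; apply: (mM).
Qed.

Lemma loc_hyp_of (m : A -> Prop) (M : lmodType A) (L : M -> Prop) :
  is_maximal_ideal m -> L 0 -> (forall x y, L x -> L y -> L (x + y)) ->
  (forall r x, L x -> L (r *: x)) -> loc_hyp m L.
Proof.
move=> hm L0 LD LZ; split => //; [exact: max_notm1 | exact: max_prime].
Qed.

Definition good (I J : A -> Prop) := [/\ is_ideal J, ~ J 1 & forall x, I x -> J x].

Lemma krull (I : A -> Prop) : is_ideal I -> ~ I 1 ->
  exists m, is_maximal_ideal m /\ forall x, I x -> m x.
Proof.
move=> II nI1.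
pose R := fun J K : A -> Prop => `[< good I J -> good I K /\ (forall x, J x -> K x) >].
have gI : good I I by split.
have [t tmax] : exists t, premaximal R t.
  apply: (@ZL_preorder _ I R).
  - by move=> t; apply/asboolP => gt; split.
  - move=> r s t /asboolP Rrs /asboolP Rst; apply/asboolP => gr.
    have [gs rs] := Rrs gr; have [gt st] := Rst gs; split => // x rx; exact/st/rs.
  - move=> S Stot.
    pose U := fun x => I x \/ exists J, [/\ S J, good I J & J x].
    have gU : good I U.
      have [I0 ID IM] := II.
      split; last by move=> x Ix; left.
      + split; first by left.
        * move=> x y [Ix|[J [SJ gJ Jx]]] [Iy|[K [SK gK Ky]]].
          - by left; apply: ID.
          - right; exists K; split => //; have [[_ KD _] _ IK] := gK.
            by apply: KD => //; apply: IK.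
          - right; exists J; split => //; have [[_ JD _] _ IJ] := gJ.
            by apply: JD => //; apply: IJ.
          - have [/asboolP RJK|/asboolP RKJ] := Stot J K SJ SK.
            + have [gK' JK] := RJK gJ; right; exists K; split => //.
              by have [[_ KD _] _ _] := gK; apply: KD => //; apply: JK.
            + have [gJ' KJ] := RKJ gK; right; exists J; split => //.
              by have [[_ JD _] _ _] := gJ; apply: JD => //; apply: KJ.
        * move=> r x [Ix|[J [SJ gJ Jx]]]; first by left; apply: IM.
          by right; exists J; split => //; have [[_ _ JM] _ _] := gJ; apply: JM.
      + move=> [//|[J [_ [_ J1 _] ?]]]; exact: J1.
    exists U => s Ss; apply/asboolP => gs; split => // x sx.
    by right; exists s.
have gt : good I t.
  apply: contrapT => ngt.
  have : R t I by apply/asboolP.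
  move=> /tmax /asboolP /(_ gI) [] //.
have [tI t1 It] := gt.
exists t; split => //; split => // J JI tJ.
case: (pselect (J 1)) => [|nJ1]; first by left.
right; have gJ : good I J by split => // x /It /tJ.
have : R t J by apply/asboolP.
move=> /tmax /asboolP /(_ gJ) [_ Jt] x; split; [exact: Jt | exact: tJ].
Qed.

Lemma ann_zero (P : lmodType A) (z : P) :
  (forall m, is_maximal_ideal m -> exists u, ~ m u /\ u *: z = 0) -> z = 0.
Proof.
move=> H.
pose I := fun u : A => u *: z = 0.
have II : is_ideal I.
  split; first by rewrite /I scale0r.
  - by move=> x y; rewrite /I scalerDl => -> ->; rewrite addr0.
  - by move=> r x; rewrite /I -scalerA => ->; rewrite scaler0.
case: (pselect (I 1)) => [I1|nI1]; first by rewrite -[z]scale1r.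
have [m [hm Im]] := krull II nI1.
have [u [hu uz]] := H m hm.
by exfalso; apply: hu; apply: Im.
Qed.

End General.

Section LP.
Variables (A : comPzRingType) (a m : A -> Prop).
Hypotheses (aI : is_ideal a) (hm : is_maximal_ideal m).

Definition gen_at (x0 : A) := forall x, a x -> exists s r, ~ m s /\ s * x = r * x0.

Lemma gen_of_lp : loc_principal a m -> exists x0, a x0 /\ gen_at x0.
Proof.
move=> [g [gs [hgs Hg]]].
have m1 := max_notm1 hm; have mP := max_prime hm.
have [a0 [u0 [a0a hu0 [v [hv ev]]]]] : in_loc_ideal a m g gs.
  apply/(Hg _ _ hgs); exists 1, 1; split => //; exists 1; split => //; ring.
exists a0; split => // x ax.
have [r [rs [hrs [w [hw ew]]]]] : exists r rs, ~ m rs /\ loc_eq m x 1 (r * g) (rs * gs).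
  apply/(Hg _ _ m1); exists x, 1; split => //; exists 1; split => //; ring.
exists (v * u0 * w * rs * gs), (w * r * v * gs); split.
  by do 4! (apply: (mP) => //).
apply/eqP; rewrite -subr_eq0; apply/eqP.
have -> : v * u0 * w * rs * gs * x - w * r * v * gs * a0 =
   (v * u0) * (w * (x * (rs * gs) - r * g * 1)) + (w * r) * (v * (g * u0 - a0 * gs)) by ring.
by rewrite ew ev !mulr0 addr0.
Qed.

Variable x0 : A.
Hypothesis gx0 : gen_at x0.

Lemma comden (l : seq A) : (forall x, x \in l -> a x) ->
  exists sg (rho : A -> A), ~ m sg /\ forall x, x \in l -> sg * x = rho x * x0.
Proof.
elim: l => [|y l IH] al.
  by exists 1, (fun _ => 0); split => //; exact: max_notm1.
have [sg [rho [hsg Hl]]] : exists sg (rho : A -> A), ~ m sg /\ forall x, x \in l -> sg * x = rho x * x0.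
  by apply: IH => x xl; apply: al; rewrite inE xl orbT.
have [s0 [r0 [hs0 e0]]] := gx0 (al y (mem_head y l)).
exists (s0 * sg), (fun x => if x == y then sg * r0 else s0 * rho x); split.
  exact: (max_prime hm).
move=> x; rewrite inE; case: eqP => [-> _|_ /= xl].
  by rewrite mulrAC e0; ring.
by rewrite -mulrA Hl // mulrA.
Qed.

Lemma regular (B : comPzRingType) (f : {rmorphism A -> B}) :
  injective f -> B_regular f a -> exists t, ~ m t /\ forall y, y * x0 = 0 -> t * y = 0.
Proof.
move=> finj /(_ 1) [s [sa e1]].
have sl : forall x, x \in [seq p.1 | p <- s] -> a x by move=> x /mapP [p ps ->]; apply: sa.
have [sg [rho [hsg Hs]]] := comden sl.
exists sg; split => // y yx0.
apply: finj; rewrite rmorph0.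
have -> : f (sg * y) = f (sg * y) * 1 by rewrite mulr1.
rewrite e1 mulr_sumr.
apply: big1_seq => p /andP [_ ps].
rewrite mulrA -rmorphM.
have -> : sg * y * p.1 = rho p.1 * (y * x0).
  have -> : sg * y * p.1 = y * (sg * p.1) by ring.
  rewrite Hs; last by apply/mapP; exists p.
  ring.
by rewrite yx0 mulr0 rmorph0 mul0r.
Qed.
End LP.

Section Key.
Variables (A : comPzRingType) (a m : A -> Prop) (x0 : A) (t : A).
Hypotheses (aI : is_ideal a) (hm : is_maximal_ideal m) (gx0 : gen_at a m x0)
  (ht : ~ m t) (treg : forall y, y * x0 = 0 -> t * y = 0).
Variable N : lmodType A.

Definition L0 := fun v : N => v = 0.
Lemma Lh : loc_hyp m L0.
Proof.
apply: loc_hyp_of => //; rewrite /L0.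
  by move=> x y -> ->; rewrite addr0.
by move=> r x ->; rewrite scaler0.
Qed.

Lemma frac_sum (s : seq (A * N)) (G : A * N -> N) sg (hsg : ~ m sg) :
  \sum_(p <- s) frac Lh (G p) sg hsg = frac Lh (\sum_(p <- s) G p) sg hsg.
Proof.
elim: s => [|p s IH]; last by rewrite !big_cons IH frac_same.
rewrite !big_nil; symmetry; apply/frac_eq0; exists 1; split.
  exact: max_notm1 hm.
by rewrite /L0 scaler0.
Qed.

Lemma key (s : seq (A * N)) (sg : A) (rho : A -> A) (hsg : ~ m sg) :
  (forall p, p \in s -> a p.1 /\ sg * p.1 = rho p.1 * x0) ->
  ideal_tensor_zero a s -> exists u, ~ m u /\ u *: \sum_(p <- s) rho p.1 *: p.2 = 0.
Proof.
move=> Hs itz.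
have : forall x, exists q : A * A, ~ m q.1 /\ (a x -> q.1 * x = q.2 * x0).
  move=> x; case: (pselect (a x)) => [ax|nax].
    by have [s0 [r0 [h0 e0]]] := gx0 ax; exists (s0, r0).
  by exists (1, 0); split => //; exact: max_notm1 hm.
case/choice => F HF.
pose beta := fun x (n : N) => frac Lh ((F x).2 *: n) (F x).1 (proj1 (HF x)).
have wd : forall x s' r (hs : ~ m s') n, a x -> s' * x = r * x0 ->
    beta x n = frac Lh (r *: n) s' hs.
  move=> x s' r hs n ax e; apply/fracP; exists t; split => //.
  rewrite /L0 !scalerA -scalerBl scalerA.
  have e1 := (proj2 (HF x)) ax.
  have -> : t * (s' * (F x).2 - (F x).1 * r) = 0; last by rewrite scale0r.
  apply: treg.
  by rewrite mulrBl -!mulrA -e1 -e; ring.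
have bil : bilinear_on a beta.
  split.
  - move=> x y n ax ay.
    have ex := (proj2 (HF x)) ax; have ey := (proj2 (HF y)) ay.
    have [_ aD _] := aI.
    rewrite (@wd (x + y) ((F x).1 * (F y).1) ((F y).1 * (F x).2 + (F x).1 * (F y).2)
       (lh_mul Lh (proj1 (HF x)) (proj1 (HF y))) n (aD _ _ ax ay)); last first.
      have -> : (F x).1 * (F y).1 * (x + y) = (F y).1 * ((F x).1 * x) + (F x).1 * ((F y).1 * y) by ring.
      by rewrite ex ey; ring.
    by rewrite /beta fracD; apply: frac_ext => //; rewrite scalerDl !scalerA.
  - move=> r x n ax.
    have ex := (proj2 (HF x)) ax.
    have [_ _ aM] := aI.
    rewrite (@wd (r * x) (F x).1 (r * (F x).2) (proj1 (HF x)) n (aM _ _ ax)); last first.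
      by rewrite mulrCA ex mulrA.
    by rewrite /beta fracZ; apply: frac_ext => //; rewrite scalerA.
  - by move=> x n n' ax; rewrite /beta frac_same; apply: frac_ext => //; rewrite scalerDr.
  - by move=> r x n ax; rewrite /beta fracZ; apply: frac_ext => //; rewrite !scalerA mulrC.
have := itz _ beta bil.
rewrite (eq_big_seq (fun p => frac Lh (rho p.1 *: p.2) sg hsg)); last first.
  by move=> p /Hs [ap ep]; apply: wd.
by rewrite frac_sum => /frac_eq0.
Qed.

End Key.

Lemma lp_ff (A B : comPzRingType) (f : {rmorphism A -> B}) (a : A -> Prop) :
  injective f -> is_ideal a -> B_regular f a -> locally_principal a ->
  faithfully_flat_ideal a.
Proof.
move=> finj aI breg lp.
have local : forall m, is_maximal_ideal m -> exists x0 t,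
    [/\ a x0, gen_at a m x0, ~ m t & forall y, y * x0 = 0 -> t * y = 0].
  move=> m hm; have [x0 [ax0 g]] := gen_of_lp hm (lp m hm).
  have [t [ht tr]] := regular hm g finj breg.
  by exists x0, t; split.
split.
- move=> N N' g ginj s sa itz' P beta bil.
  apply: ann_zero => m hm.
  have [x0 [t [ax0 gx0 ht tr]]] := local m hm.
  have sl : forall x, x \in [seq p.1 | p <- s] -> a x by move=> x /mapP [p ps ->]; apply: sa.
  have [sg [rho [hsg Hs]]] := comden hm gx0 sl.
  have cond : forall q, q \in [seq (p.1, g p.2) | p <- s] -> a q.1 /\ sg * q.1 = rho q.1 * x0.
    move=> q /mapP [p ps ->] /=; split; first exact: sa.
    by apply: Hs; apply/mapP; exists p.
  have [u [hu Hu]] := key aI hm gx0 ht tr hsg cond itz'.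
  rewrite big_map /= in Hu.
  have Hn : u *: \sum_(p <- s) rho p.1 *: p.2 = 0.
    apply: ginj; rewrite linear0 linearZ linear_sum /=.
    rewrite -[RHS]Hu; congr (_ *: _); apply: eq_bigr => p _; exact: linearZ.
  have [b1 b2 b3 b4] := bil.
  have b0 : forall x, a x -> beta x 0 = 0.
    by move=> x ax; have := b4 0 x 0 ax; rewrite !scale0r.
  exists (u * sg); split; first exact: (max_prime hm).
  rewrite scaler_sumr.
  transitivity (\sum_(p <- s) beta x0 ((u * rho p.1) *: p.2)).
    apply: eq_big_seq => p ps.
    rewrite -scalerA -b2; last exact: sa.
    have -> : beta (sg * p.1) p.2 = beta (rho p.1 * x0) p.2.
      by congr beta; apply: Hs; apply/mapP; exists p.
    by rewrite b2 // b4 // scalerA.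
  have bsum : forall (l : seq (A * N)) (G : A * N -> N),
      \sum_(p <- l) beta x0 (G p) = beta x0 (\sum_(p <- l) G p).
    move=> l G; elim: l => [|q l IH]; first by rewrite !big_nil b0.
    by rewrite !big_cons IH b3.
  transitivity (beta x0 (\sum_(p <- s) (u * rho p.1) *: p.2)); first exact: bsum.
  have -> : \sum_(p <- s) (u * rho p.1) *: p.2 = u *: \sum_(p <- s) rho p.1 *: p.2.
    by rewrite scaler_sumr; apply: eq_bigr => p _; rewrite scalerA.
  by rewrite Hn b0.
- move=> N HN n; apply: ann_zero => m hm.
  have [x0 [t [ax0 gx0 ht tr]]] := local m hm.
  have cond : forall q, q \in [:: (x0, n)] -> a q.1 /\ 1 * q.1 = (fun _ => 1) q.1 * x0.
    by move=> q; rewrite inE => /eqP -> /=.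
  have [u [hu Hu]] := @key A a m x0 t aI hm gx0 ht tr N [:: (x0, n)] 1 (fun _ => 1) (max_notm1 hm) cond (HN x0 n ax0).
  by exists u; split => //; move: Hu; rewrite big_seq1 scale1r.
Qed.

Lemma ff_lp (A : comPzRingType) (a : A -> Prop) :
  is_ideal a -> faithfully_flat_ideal a -> locally_principal a.
Proof.
move=> aI [fl fa] m hm.
have [m0 mD mM] := max_ideal hm.
have [a0 aD aM] := aI.
pose Lk := fun v : A^o => m v.
have hk : loc_hyp m Lk.
  by apply: loc_hyp_of => //; rewrite /Lk => r v mv; apply: mM.
have m1 := max_notm1 hm.
have k1 : frac hk (1 : A^o) 1 m1 <> 0.
  move/frac_eq0 => [u [hu Hu]]; apply: hu; move: Hu; rewrite /Lk.
  by have -> : u *: (1 : A^o) = u by rewrite /GRing.scale /= mulr1.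
have [x [n [ax hn]]] : exists x (n : Loc hk), a x /\ ~ ideal_tensor_zero a [:: (x, n)].
  apply: contrapT => H; apply: k1; apply: (fa (Loc hk)) => z n az.
  apply: contrapT => nt; apply: H; by exists z, n.
have [P [beta [bil hb]]] : exists (P : lmodType A) (beta : A -> Loc hk -> P),
    bilinear_on a beta /\ beta x n <> 0.
  apply: contrapT => H; apply: hn => P beta bil; rewrite big_seq1 /=.
  apply: contrapT => nb; apply: H; by exists P, beta.
have [r [sn [hsn en]]] := frac_surj n.
have [b1 b2 b3 b4] := bil.
have b0 : forall z, a z -> beta z 0 = 0.
  by move=> z az; have := b4 0 z 0 az; rewrite !scale0r.
have sc : forall (c : A) (z : A^o), c *: z = c * z by [].
have step2 : forall y, a y -> exists c d, ~ m c /\ c * y = d * x.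
  move=> y ay; apply: contrapT => Hc.
  pose K := fun w : (A^o * A^o)%type => (w.1 : A) * y = (w.2 : A) * x.
  have hK : loc_hyp m K.
    apply: loc_hyp_of => //; rewrite /K /=.
    - by rewrite !mul0r.
    - by move=> w w' e e'; rewrite !mulrDl e e'.
    - by move=> c w e; rewrite /= !sc -!mulrA e.
  pose L0 := fun v : A^o => v = 0.
  have hN : loc_hyp m L0.
    apply: loc_hyp_of => //; rewrite /L0.
    - by move=> v w -> ->; rewrite addr0.
    - by move=> c v ->; rewrite scaler0.
  pose phi := fun w : (A^o * A^o)%type => ((w.1 : A) * y - (w.2 : A) * x : A^o).
  have phiD : forall v w, phi (v + w) = phi v + phi w.
    by move=> v w; rewrite /phi /=; ring.
  have phiZ : forall (c : A) v, phi (c *: v) = c *: phi v.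
    by move=> c v; rewrite /phi /= !sc; ring.
  have phiL : forall v, K v -> L0 (phi v).
    by move=> v; rewrite /K /L0 /phi => ->; rewrite subrr.
  pose g := @locmapL _ _ _ _ _ _ hK hN phi phiD phiZ phiL 1 m1.
  have ginj : injective g.
    have g0 : forall q, g q = 0 -> q = 0.
      move=> q; have [w [s [hs ->]]] := frac_surj q.
      rewrite locmapLE (locmap_frac hK hN phiD phiZ phiL m1) => /frac_eq0 [u [hu Hu]].
      apply/frac_eq0; exists u; split => //.
      move: Hu; rewrite /L0 /K -phiZ /phi => /eqP; rewrite subr_eq0 => /eqP.
      by [].
    move=> q1 q2 e; apply/eqP; rewrite -subr_eq0; apply/eqP; apply: g0.
    by rewrite linearB e subrr.
  pose e1 := frac hK ((1, 0) : (A^o * A^o)%type) 1 m1.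
  pose e2 := frac hK ((0, 1) : (A^o * A^o)%type) 1 m1.
  pose iota := frac hN (1 : A^o) 1 m1.
  have ge1 : locmap hN phi m1 e1 = y *: iota.
    rewrite (locmap_frac hK hN phiD phiZ phiL m1) /iota fracZ.
    by apply: frac_ext; rewrite /phi /= ?sc; ring.
  have ge2 : locmap hN phi m1 e2 = (- x) *: iota.
    rewrite (locmap_frac hK hN phiD phiZ phiL m1) /iota fracZ.
    by apply: frac_ext; rewrite /phi /= ?sc; ring.
  have itz' : ideal_tensor_zero a [seq (p.1, g p.2) | p <- [:: (x, e1); (y, e2)]].
    move=> Q gam [c1 c2 c3 c4] /=.
    rewrite big_cons big_cons big_nil addr0 /= ge1 ge2 !c4 //.
    rewrite -(c2 _ _ _ ax) -(c2 _ _ _ ay) -(c1 _ _ _ (aM y x ax) (aM (-x) y ay)).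
    have -> : y * x + - x * y = 0 by ring.
    by have := c2 0 0 iota a0; rewrite mul0r scale0r.
  have cond : forall p, p \in [:: (x, e1); (y, e2)] -> a p.1.
    by move=> p; rewrite !inE => /orP [/eqP -> | /eqP ->].
  have fl' := fl _ _ g ginj [:: (x, e1); (y, e2)] cond itz'.
  pose psi := fun w : (A^o * A^o)%type => ((w.1 : A) * (r : A) : A^o).
  have psiD : forall v w, psi (v + w) = psi v + psi w.
    by move=> v w; rewrite /psi /=; ring.
  have psiZ : forall (c : A) v, psi (c *: v) = c *: psi v.
    by move=> c v; rewrite /psi /= !sc; ring.
  have psiL : forall v, K v -> Lk (psi v).
    move=> v Kv; rewrite /Lk /psi.
    case: (pselect (m v.1)) => [mv|nmv]; first by rewrite mulrC; apply: mM.
    by exfalso; apply: Hc; exists v.1, v.2.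
  pose mu := @locmapL _ _ _ _ _ _ hK hk psi psiD psiZ psiL sn hsn.
  pose beta' := fun z q => beta z (mu q).
  have bil' : bilinear_on a beta'.
    split; rewrite /beta'.
    - by move=> z z' q az az'; rewrite b1.
    - by move=> c z q az; rewrite b2.
    - by move=> z q q' az; rewrite raddfD b3.
    - by move=> c z q az; rewrite linearZ b4.
  have := fl' P beta' bil'.
  rewrite big_cons big_cons big_nil addr0 /beta' /=.
  have -> : locmap hk psi hsn e1 = n.
    rewrite (locmap_frac hK hk psiD psiZ psiL hsn) en.
    by apply: frac_ext; rewrite /psi /= mul1r.
  have -> : locmap hk psi hsn e2 = 0.
    rewrite (locmap_frac hK hk psiD psiZ psiL hsn).
    apply/frac_eq0; exists 1; split => //.
    by rewrite /Lk /psi /= mul0r scaler0.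
  by rewrite b0 // addr0.
exists x, 1; split => // X s hs; split.
- move=> [b0' [u [ab hu [w [hw ew]]]]].
  have [c [d [hc ecd]]] := step2 b0' ab.
  exists d, (u * c); split; first exact: (max_prime hm).
  exists w; split => //.
  have -> : w * (X * (u * c * 1) - d * x * s) =
     c * (w * (X * u - b0' * s)) + w * s * (c * b0' - d * x) by ring.
  by rewrite ew ecd subrr !mulr0 addr0.
- move=> [r0 [rs [hrs le]]]; exists (r0 * x), (rs * 1); split => //.
  + exact: aM.
  + by rewrite mulr1.
Qed.

Unset Implicit Arguments.

Theorem proposition2p3 (A B : comPzRingType) (f : {rmorphism A -> B})
  (a : A -> Prop) :
  injective f -> is_ideal a -> B_regular f a ->
  (faithfully_flat_ideal a <-> locally_principal a).
Proof.
move=> finj aI breg; split.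
- exact: ff_lp.
- exact: lp_ff finj aI breg.
Qed.
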